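(* Let $G$ be a connected edge-square finite simple graph of order $p$ and size $q$, with normal graph algebra $\mathcal{N}G$ over a field $\mathbb{F}$ of characteristic not $2$. Then $q=p-1$ or $q=p$, and: (1) if $q=p-1$, then $\mathcal{N}G$ is isomorphic (as a normal algebra) to $\mathbb{F}^0\oplus\mathcal{O}_{p-1}$, $\dim\mathrm{ann}\,G=1$, and $G$ is a tree; (2) if $q=p$, then $\mathcal{N}G$ is isomorphic to $\mathcal{O}_p$, $\dim\mathrm{ann}\,G=0$, and $G$ is unicyclic with an odd cycle.
   Context: A normal algebra is a finite-dimensional $\mathbb{F}$-vector space $\mathcal{N}=U\oplus\mathfrak{Z}$ with a commutative bilinear product such that $U\mathfrak{Z}=0$, $\mathfrak{Z}\mathfrak{Z}=0$, $UU\subseteq\mathfrak{Z}$; an isomorphism of normal algebras is a product-preserving linear bijection mapping $U$ onto $U'$ and $\mathfrak{Z}$ onto $\mathfrak{Z}'$; direct sums are taken componentwise. For a finite simple graph $G$ with vertex set $VG$ ($p=|VG|$) and edge set $EG$ ($q=|EG|$), the normal graph algebra $\mathcal{N}G$ has $U=U_G$ with basis $VG$ and $\mathfrak{Z}=\mathfrak{Z}_G$ with basis $EG$ (edge with endpoints $x,y$ written $[x,y]$), with product determined by: for distinct vertices $x,y$, $xy=[x,y]$ if adjacent and $0$ otherwise; $x^2=\sum_{y\sim x}[x,y]$. $G$ is edge-square if for every edge $\mathfrak{e}$ there is $u\in U_G$ with $u^2=\mathfrak{e}$. $\mathrm{ann}\,G=\{u\in U_G: uU_G=0\}$. $\mathbb{F}^0$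 is the normal algebra with $U=\mathbb{F}$, $\mathfrak{Z}=0$ and all products $0$. For $n\ge0$, $\mathcal{O}_n$ is the normal algebra with $U=\langle w_1,\dots,w_n\rangle$, $\mathfrak{Z}=\langle\mathfrak{z}_1,\dots,\mathfrak{z}_n\rangle$ (bases), $w_i^2=\mathfrak{z}_i$, $w_iw_j=0$ for $i\ne j$, and all other basis products $0$. A unicyclic graph is a connected graph with exactly one cycle. *)

(* Defs.v *)
From HB Require Import structures.
From mathcomp Require Import all_boot all_order all_algebra.
Set Implicit Arguments. Unset Strict Implicit. Unset Printing Implicit Defensive.
Import GRing.Theory.
Local Open Scope ring_scope.

(* A normal algebra N = U (+) Z, with U = F^dimU and Z = F^dimZ given in
   coordinates, and the (commutative, bilinear) product U x U -> Z; all other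
   products (involving Z) are zero, so the algebra is determined by nmul. *)
Record nalg (F : fieldType) := NAlg {
  dimU : nat;
  dimZ : nat;
  nmul : 'rV[F]_dimU -> 'rV[F]_dimU -> 'rV[F]_dimZ }.

Definition lin_map (F : fieldType) n m (f : 'rV[F]_n -> 'rV[F]_m) : Prop :=
  forall (a : F) u v, f (a *: u + v) = a *: f u + f v.

Definition nalg_iso (F : fieldType) (A B : nalg F) : Prop :=
  exists (f : 'rV[F]_(dimU A) -> 'rV[F]_(dimU B))
         (g : 'rV[F]_(dimZ A) -> 'rV[F]_(dimZ B)),
    [/\ lin_map f, lin_map g, bijective f, bijective g &
        forall u v, g (@nmul F A u v) = @nmul F B (f u) (f v)].

Definition dsum (F : fieldType) (A B : nalg F) : nalg F :=
  @NAlg F (dimU A + dimU B) (dimZ A + dimZ B)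
    (fun u v => row_mx (@nmul F A (lsubmx u) (lsubmx v))
                       (@nmul F B (rsubmx u) (rsubmx v))).

Definition F0 (F : fieldType) : nalg F := @NAlg F 1 0 (fun _ _ => 0).

(* O_n : w_i^2 = z_i, w_i w_j = 0 (i <> j), extended bilinearly *)
Definition Oalg (F : fieldType) (n : nat) : nalg F :=
  @NAlg F n n (fun u v => \row_i (u 0 i * v 0 i)).

Definition simple_graph (T : finType) (e : rel T) : Prop :=
  irreflexive e /\ symmetric e.

Definition edges (T : finType) (e : rel T) : {set {set T}} :=
  [set [set p.1; p.2] | p in [set p : T * T | e p.1 p.2]].

Section GraphAlgebra.
Variables (F : fieldType) (T : finType) (e : rel T).

Definition edg (s : {set T}) : 'rV[F]_#|edges e| :=
  \row_k ((enum_val k == s)%:R).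

Definition bprod (x y : T) : 'rV[F]_#|edges e| :=
  if x == y then \sum_(y' | e x y') edg [set x; y']
  else if e x y then edg [set x; y] else 0.

(* coordinates of u in U_G: u 0 (enum_rank x) is the coefficient of vertex x *)
Definition gmul (u v : 'rV[F]_#|T|) : 'rV[F]_#|edges e| :=
  \sum_x \sum_y (u 0 (enum_rank x) * v 0 (enum_rank y)) *: bprod x y.

Definition NG : nalg F := @NAlg F #|T| #|edges e| gmul.

Definition edge_square : Prop :=
  forall s, s \in edges e -> exists u, gmul u u = edg s.

Definition ann (u : 'rV[F]_#|T|) : Prop := forall v, gmul u v = 0.

End GraphAlgebra.
Arguments ann F [T] e u%_ring_scope.
Arguments gmul F [T] e u%_ring_scope v%_ring_scope.

Definition has_dim (F : fieldType) n (P : 'rV[F]_n -> Prop) (d : nat) : Prop :=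
  exists A : 'M[F]_(d, n), row_free A /\ forall u, P u <-> (u <= A)%MS.

Section GraphNotions.
Variables (T : finType) (e : rel T).

Definition gconnected : Prop := forall x y, connect e x y.

Definition is_cycle (c : seq T) : Prop := [/\ 3 <= size c, uniq c & cycle e c]%N.

Definition cycle_edges (c : seq T) : {set {set T}} :=
  [set [set x; next c x] | x in c].

Definition is_tree : Prop := gconnected /\ forall c, ~ is_cycle c.

(* exactly one cycle (cycles identified by their edge sets) *)
Definition unicyclic : Prop :=
  gconnected /\ exists c, is_cycle c /\
    forall c', is_cycle c' -> cycle_edges c' = cycle_edges c.

End GraphNotions.

(* Main.v *)
Require Import Defs.
From HB Require Import structures.
From mathcomp Require Import all_boot all_order all_algebra.
From mathcomp Require Import ring zify.
From Stdlib Require Import Classical_Prop.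
Set Implicit Arguments. Unset Strict Implicit. Unset Printing Implicit Defensive.
Import GRing.Theory.
Local Open Scope ring_scope.


Section Generic.
Variable F : fieldType.

Definition pmul n m (M : 'M[F]_(n,m)) (u v : 'rV[F]_n) : 'rV[F]_m :=
  \row_k ((u *m M) 0 k * (v *m M) 0 k).

Lemma lin_mulmx n m (A : 'M[F]_(n,m)) : lin_map (fun u : 'rV_n => u *m A).
Proof. by move=> a u v; rewrite mulmxDl scalemxAl. Qed.

Lemma iso_O n m (M : 'M[F]_(n,m)) (mul : 'rV[F]_n -> 'rV[F]_n -> 'rV[F]_m) :
  (forall u v, mul u v = pmul M u v) -> row_full M -> m = n ->
  nalg_iso (@NAlg F n m mul) (Oalg F n).
Proof.
move=> hmul hfull hmn; subst m.
have hU : M \in unitmx by rewrite -row_full_unit.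
exists (fun u => u *m M), id; split.
- exact: lin_mulmx.
- by move=> a u v.
- by exists (fun u => u *m invmx M) => u; [rewrite mulmxK | rewrite mulmxKV].
- by exists id.
- by move=> u v /=; rewrite hmul.
Qed.

Lemma iso_F0O n m (M : 'M[F]_(n,m)) (mul : 'rV[F]_n -> 'rV[F]_n -> 'rV[F]_m) :
  (forall u v, mul u v = pmul M u v) -> row_full M -> n = m.+1 ->
  nalg_iso (@NAlg F n m mul) (dsum (F0 F) (Oalg F n.-1)).
Proof.
move=> hmul hfull hmn; subst n.
have hK : \rank (kermx M) = 1%N.
  by rewrite mxrank_ker (eqP hfull) subSnn.
have : kermx M != 0 by rewrite -mxrank_eq0 hK.
case/rowV0Pn => w hwK hw0.
have hKw : (kermx M <= w)%MS.
  have := mxrank_leqif_sup hwK; rewrite hK rank_rV hw0 => h.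
  by rewrite -(geq_leqif h).
case/rV0Pn: hw0 => i0 hi0.
pose c : 'cV[F]_(m.+1) := delta_mx i0 0.
pose N : 'M[F]_(m.+1) := row_mx c M.
have eN : forall v : 'rV_(m.+1), v *m N = row_mx (v *m c) (v *m M) :> 'rV_(1 + m).
  by move=> v; exact: mul_mx_row.
have hN : N \in unitmx.
  rewrite -row_free_unit; apply: inj_row_free => v.
  rewrite eN => h.
  have hc0 : (v *m c) 0 0 = 0.
    have := congr1 (fun X : 'rV_(1 + m) => X 0 (lshift m 0)) h. by rewrite /= (row_mxEl (v *m c)) [X in _ = X -> _]mxE.
  have hM : v *m M = 0.
    apply/rowP => k.
    have := congr1 (fun X : 'rV_(1 + m) => X 0 (rshift 1 k)) h; rewrite /= (row_mxEr (v *m c)) [X in _ = X -> _]mxE => ->; by rewrite mxE.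
  have : (v <= w)%MS by apply: submx_trans hKw; rewrite sub_kermx hM.
  case/sub_rVP => a hva.
  move: hc0; rewrite /c -colE mxE hva mxE; move/eqP; rewrite mulf_eq0 (negbTE hi0) orbF.
  by move/eqP => ->; rewrite scale0r.
exists (fun u : 'rV_(m.+1) => u *m N : 'rV_(1 + m)),
       (fun z : 'rV_m => row_mx (0 : 'rV_0) z : 'rV_(0 + m)); split.
- exact: lin_mulmx.
- move=> a u v; apply/rowP => k; rewrite !mxE.
  by case: splitP => j _; rewrite !mxE ?flatmx0 //; case: j => //.
- by exists (fun u => u *m invmx N) => u; [rewrite mulmxK | rewrite mulmxKV].
- exists (fun z => rsubmx z) => z; first by rewrite row_mxKr.
  by rewrite -[RHS]hsubmxK (thinmx0 (lsubmx z)).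
- by move=> u v /=; rewrite hmul !eN !row_mxKr.
Qed.

Lemma has_dim_ker n m (M : 'M[F]_(n,m)) (P : 'rV[F]_n -> Prop) d :
  (forall u, P u <-> u *m M = 0) -> \rank (kermx M) = d -> has_dim P d.
Proof.
move=> hP <-; exists (row_base (kermx M)); split; first exact: row_base_free.
move=> u; rewrite hP eq_row_base sub_kermx; split; first by move->.
by move/eqP.
Qed.

End Generic.


Lemma conn_closed (T : finType) (e : rel T) (P : T -> Prop) x z :
  (forall a b, e a b -> P a -> P b) -> P x -> connect e x z -> P z.
Proof.
move=> hc hx /connectP [p pp ->]; elim: p x hx pp => //= y p IH x hx /andP [exy pp].
exact: IH (hc _ _ exy hx) pp.
Qed.

Section GraphAlg.
Variables (F : fieldType) (T : finType) (e : rel T).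
Hypotheses (irr : irreflexive e) (sym : symmetric e).

Definition Mg : 'M[F]_(#|T|, #|edges e|) :=
  \matrix_(i < #|T|, k < #|edges e|) (((enum_val i : T) \in (enum_val k : {set T}))%:R).
Definition Uf (u : 'rV[F]_#|T|) (x : T) : F := u 0 (enum_rank x).
Definition vecf (w : T -> F) : 'rV[F]_#|T| := \row_i w (enum_val i).
Definition Lw (w : T -> F) (s : {set T}) : F := \sum_(x in s) w x.

Lemma UfK w x : Uf (vecf w) x = w x.
Proof. by rewrite /Uf /vecf mxE enum_rankK. Qed.

Lemma edgesP s : s \in edges e -> exists a b, e a b /\ s = [set a; b].
Proof. by case/imsetP => -[a b]; rewrite inE /= => eab ->; exists a, b. Qed.

Lemma edgesI a b : e a b -> [set a; b] \in edges e.
Proof. by move=> eab; apply/imsetP; exists (a, b); rewrite ?inE. Qed.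

Lemma neq_edge a b : e a b -> a != b.
Proof. by move=> eab; apply/eqP => hab; move: eab; rewrite hab irr. Qed.

Lemma Lw2 w a b : a != b -> Lw w [set a; b] = w a + w b.
Proof. by move=> ab; rewrite /Lw big_setU1 ?inE // big_set1. Qed.

Lemma mulMg u k : (u *m Mg) 0 k = Lw (Uf u) (enum_val k).
Proof.
rewrite !mxE /Lw /Uf [RHS](reindex _ (onW_bij _ (@enum_val_bij T))) /= [RHS]big_mkcond /=.
apply: eq_bigr => i _; rewrite mxE enum_valK.
by case: ifP => _; [rewrite mulr1 | rewrite mulr0].
Qed.

Lemma pair_eq (a b x y : T) : a != b -> x != y ->
  ([set a; b] == [set x; y]) = (x \in [set a; b]) && (y \in [set a; b]).
Proof.
move=> ab xy; rewrite eq_sym eqEcard !cards2 ab xy andbT.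
by rewrite subUset !sub1set.
Qed.

Lemma bprodE x y k :
  (bprod F e x y) 0 k = ((x \in enum_val k) && (y \in enum_val k))%:R.
Proof.
have [a [b [eab hs]]] := edgesP (enum_valP k).
have ab := neq_edge eab.
rewrite /bprod; case: eqP => [<-|/eqP nxy].
  rewrite summxE andbb.
  case hx: (x \in enum_val k).
    have [z [exz hz]] : exists z, e x z /\ enum_val k = [set x; z].
      move: hx; rewrite hs => /set2P [->|->]; first by exists b.
      by exists a; rewrite sym setUC.
    rewrite (bigD1 z) //= mxE hz eqxx big1 ?addr0 // => y' /andP [exy' ny'].
    have yx : (y' == x) = false by apply/negbTE; rewrite eq_sym; exact: neq_edge exy'.
    rewrite mxE hz pair_eq ?(neq_edge exz) ?(neq_edge exy') // !inE yx (negbTE ny').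
    by rewrite andbF.
  rewrite big1 // => y' exy'; rewrite mxE; case: eqP => // hk.
  by move: hx; rewrite hk set21.
case: ifP => exy.
  by rewrite mxE hs pair_eq // -hs.
rewrite mxE; case hxs: (x \in enum_val k) => //; case hys: (y \in enum_val k) => //.
move: hxs hys; rewrite hs => /set2P hx /set2P hy.
case: hx hy nxy exy => -> [] -> //; rewrite ?eqxx // => _.
- by rewrite eab.
- by rewrite sym eab.
Qed.
Lemma gmulE u v : gmul F e u v = pmul Mg u v.
Proof.
apply/rowP => k; rewrite /gmul /pmul mxE !mulMg summxE /Lw.
rewrite big_distrl /= [RHS]big_mkcond /=; apply: eq_bigr => x _.
rewrite summxE.
case hx: (x \in enum_val k).
  rewrite big_distrr /= [RHS]big_mkcond /=; apply: eq_bigr => y _; rewrite mxE bprodE hx /=.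
  by case: (y \in enum_val k); rewrite ?mulr1 ?mulr0.
by rewrite big1 // => y _; rewrite mxE bprodE hx /= mulr0.
Qed.
Lemma gmul_at u v a b (eab : e a b) :
  (gmul F e u v) 0 (enum_rank_in (edgesI eab) [set a; b]) =
  Lw (Uf u) [set a; b] * Lw (Uf v) [set a; b].
Proof. by rewrite gmulE mxE !mulMg (enum_rankK_in _ (edgesI eab)). Qed.

Lemma edg_at s a b (eab : e a b) :
  (edg F e s) 0 (enum_rank_in (edgesI eab) [set a; b]) = ([set a; b] == s)%:R.
Proof. by rewrite mxE (enum_rankK_in _ (edgesI eab)). Qed.

Lemma esq_w : edge_square F e -> forall s, s \in edges e ->
  exists w : T -> F, forall a b, e a b -> w a + w b = ([set a; b] == s)%:R.
Proof.
move=> hes s sE; have [u hu] := hes s sE.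
have key : forall a b, e a b -> Lw (Uf u) [set a; b] ^+ 2 = ([set a; b] == s)%:R.
  by move=> a b eab; rewrite expr2 -gmul_at hu edg_at.
have [a0 [b0 [eab0 hs]]] := edgesP sE.
have hc : Lw (Uf u) s * Lw (Uf u) s = 1 by rewrite hs -expr2 key // -hs eqxx.
exists (fun x => Lw (Uf u) s * Uf u x) => a b eab.
rewrite -mulrDr -Lw2 ?neq_edge //.
case: eqP => hab; first by rewrite hab hc.
have := key a b eab; rewrite (introF eqP hab) => /eqP; rewrite expf_eq0 /= => /eqP ->.
by rewrite mulr0.
Qed.

Lemma Mg_full : edge_square F e -> row_full Mg.
Proof.
move=> hes; rewrite -sub1mx; apply/row_subP => k.
have [w hw] := esq_w hes (enum_valP k).
suff -> : row k 1%:M = vecf w *m Mg by rewrite submxMl.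
apply/rowP => k'; rewrite mulMg !mxE.
have [a [b [eab hs]]] := edgesP (enum_valP k').
rewrite /Lw (eq_bigr w) => [|x _]; last exact: UfK.
rewrite -/(Lw w _) hs Lw2 ?neq_edge // hw // -hs (inj_eq enum_val_inj) eq_sym.
by [].
Qed.

Lemma kerP u : u *m Mg = 0 <-> (forall a b, e a b -> Uf u a + Uf u b = 0).
Proof.
split.
- move=> h a b eab.
  have := congr1 (fun X : 'rV[F]_#|edges e| => X 0 (enum_rank_in (edgesI eab) [set a; b])) h.
  by rewrite /= mulMg (enum_rankK_in _ (edgesI eab)) Lw2 ?neq_edge // mxE.
- move=> h; apply/rowP => k; rewrite mulMg mxE.
  have [a [b [eab ->]]] := edgesP (enum_valP k).
  by rewrite Lw2 ?neq_edge //; exact: h.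
Qed.

Lemma annP u : row_full Mg -> ann F e u <-> u *m Mg = 0.
Proof.
move=> hf; split.
- move=> h; case/row_fullP: hf => B hB; apply/rowP => k.
  have := congr1 (fun X : 'rV[F]_#|edges e| => X 0 k) (h (row k B)).
  have h1 : (row k (1%:M : 'M[F]_#|edges e|)) 0 k = 1 by rewrite !mxE eqxx.
  rewrite gmulE /= mxE -row_mul hB h1 mulr1 => ->.
  by rewrite mxE.
- move=> h v; rewrite /ann gmulE; apply/rowP => k.
  by rewrite mxE h mxE mul0r.
Qed.

Lemma Uf0 v : (forall z, Uf v z = 0) -> v = 0.
Proof.
by move=> hz; apply/rowP => i; have := hz (enum_val i); rewrite /Uf enum_valK mxE.
Qed.

Lemma ker_rank (x0 : T) : gconnected e -> (\rank (kermx Mg) <= 1)%N.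
Proof.
move=> hcon.
have := mxrank_mul_ker (kermx Mg) (delta_mx (enum_rank x0) (0 : 'I_1)) => <-.
suff -> : \rank (kermx Mg :&: kermx (delta_mx (enum_rank x0) (0 : 'I_1)))%MS = 0%N.
  by rewrite addn0 rank_leq_col.
apply/eqP; rewrite mxrank_eq0; apply/rowV0P => v.
rewrite sub_capmx !sub_kermx => /andP [/eqP h1 /eqP h2].
have hv0 : Uf v x0 = 0.
  by have := congr1 (fun X : 'M[F]_(1,1) => X 0 0) h2; rewrite /= -colE !mxE.
have hker := (kerP v).1 h1.
apply: Uf0 => z; apply: (conn_closed (e := e) (P := fun z => Uf v z = 0)) (hcon x0 z) => //.
by move=> a b eab ha; have := hker a b eab; rewrite ha add0r.
Qed.
End GraphAlg.


Section Cyc.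
Variables (T : finType) (e : rel T).
Hypotheses (irr : irreflexive e) (sym : symmetric e).

Lemma walk_sign (F : fieldType) (w : T -> F) x s :
  path (fun a b => w a + w b == 0) x s -> w (last x s) = (-1) ^+ size s * w x.
Proof.
elim: s x => [|y s IH] x /=; first by rewrite expr0 mul1r.
move=> /andP [h p]; rewrite (IH y p) exprS.
have -> : w y = - w x by apply/eqP; rewrite -addr_eq0 addrC.
by rewrite mulrN mulN1r mulNr.
Qed.

Lemma path_avoid (P : pred T) (r1 r2 : rel T) a s :
  (forall a b, P a -> r1 a b -> r2 a b) -> all P (belast a s) ->
  path r1 a s -> path r2 a s.
Proof.
move=> h; elim: s a => //= b s IH a /andP [Pa Ps] /andP [r1ab ps].
by rewrite (h _ _ Pa r1ab) (IH _ Ps ps).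
Qed.

Lemma pair_eq' (a b x y : T) : a != b -> x != y ->
  ([set a; b] == [set x; y]) = (x \in [set a; b]) && (y \in [set a; b]).
Proof.
move=> ab xy; rewrite eq_sym eqEcard !cards2 ab xy andbT.
by rewrite subUset !sub1set.
Qed.

Lemma neq_e a b : e a b -> a != b.
Proof. by move=> eab; apply/eqP => hab; move: eab; rewrite hab irr. Qed.

Lemma cycle_key0 (F : fieldType) (w : T -> F) x s :
  is_cycle e (x :: s) ->
  (forall a b, e a b -> w a + w b = ([set a; b] == [set x; next (x :: s) x])%:R) ->
  odd (size (x :: s)) /\ w x = w (next (x :: s) x).
Proof.
case: s => [|y [|z s3]] [] //= _ hu hc.
rewrite eqxx negbK => hw.
case/and4P: hu => hx hy _ _.
move: hx hy; rewrite !inE !negb_or => /and3P [xy xz xs3] /andP [yz ys3].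
case/and3P: hc => exy eyz pz.
have hp : path (fun a b => w a + w b == 0) y (z :: rcons s3 x).
  rewrite /= hw // eq_sym pair_eq' ?(neq_e exy) ?(neq_e eyz) //.
  rewrite !inE eqxx /= (negbTE xz) (negbTE xy) /= eqxx /=.
  apply: (path_avoid (P := fun a => (a != x) && (a != y))) pz; last first.
    rewrite belast_rcons /= eq_sym xz eq_sym yz /=.
    apply/allP => t ts; apply/andP; split; apply/eqP => ht; subst t.
      by rewrite ts in xs3.
    by rewrite ts in ys3.
  move=> a b /andP [ax ay] eab; rewrite hw // (eq_sym [set a; b]) pair_eq' ?(neq_e exy) ?(neq_e eab) //.
  by rewrite !inE (negbTE ax) (negbTE ay).
have := walk_sign hp; rewrite /= last_rcons size_rcons -signr_odd /= negbK.
have hxy := hw x y exy; rewrite eqxx in hxy.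
case: (odd (size s3)) => /= hwx.
  by move: hxy; rewrite hwx expr1 mulN1r addNr => /eqP; rewrite eq_sym oner_eq0.
by split => //; rewrite hwx expr0 mul1r.
Qed.
Lemma cycle_key (F : fieldType) (w : T -> F) c x :
  is_cycle e c -> x \in c ->
  (forall a b, e a b -> w a + w b = ([set a; b] == [set x; next c x])%:R) ->
  odd (size c) /\ w x = w (next c x).
Proof.
move=> [h3 hu hc] xc hw.
case: (rot_to xc) => i s hrot.
have hn : next c x = next (x :: s) x by rewrite -hrot next_rot.
have hsz : size c = size (x :: s) by rewrite -hrot size_rot.
rewrite hn hsz; apply: cycle_key0; last by rewrite -hn.
by split; rewrite -hrot ?size_rot ?rot_uniq ?rot_cycle.
Qed.

Lemma cycle_zero (F : fieldType) (w : T -> F) z s : (2%:R : F) != 0 ->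
  is_cycle e (z :: s) -> odd (size (z :: s)) ->
  (forall a, a \in z :: s -> w a + w (next (z :: s) a) = 0) -> w z = 0.
Proof.
move=> h2 [_ hu _] hodd h.
have hc : cycle (fun a b => w a + w b == 0) (z :: s).
  by apply: cycle_from_next => // a ha; rewrite h.
have hp : path (fun a b => w a + w b == 0) z (rcons s z) := hc.
have := walk_sign hp; rewrite last_rcons size_rcons -signr_odd /=.
rewrite /= in hodd; rewrite hodd expr1 mulN1r => hz.

have : w z * 2%:R = 0 by rewrite mulr_natr mulr2n {1}hz addNr.
by move/eqP; rewrite mulf_eq0 (negbTE h2) orbF => /eqP.
Qed.

Lemma notuniq_split (s : seq T) : ~~ uniq s ->
  exists z s1 s2 s3, s = s1 ++ z :: s2 ++ z :: s3.
Proof.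
elim: s => //= x s IH; rewrite negb_and negbK.
case/orP => [xs|/IH [z [s1 [s2 [s3 ->]]]]].
  by case/splitPr: xs => p1 p2; exists x, [::], p1, p2.
by exists z, (x :: s1), s2, s3.
Qed.

Lemma odd_walk_cycle s : cycle e s -> odd (size s) ->
  exists c, is_cycle e c /\ odd (size c).
Proof.
suff H : forall n s, size s = n -> cycle e s -> odd n ->
  exists c, is_cycle e c /\ odd (size c) by move=> hc ho; exact: H _ s erefl hc ho.
elim/ltn_ind => n IH {}s hn hc hodd.
case hu: (uniq s).
  exists s; split; last by rewrite hn.
  split => //; rewrite -hn in hodd; move: hodd hc.
  case: s {hn hu} => [|x [|y [|z t]]] //=.
  by rewrite irr.
have [z [s1 [s2 [s3 hs]]]] := notuniq_split (negbT hu).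
have hc' : cycle e (z :: s2 ++ z :: (s3 ++ s1)).
  move: hc; rewrite hs -(rot_cycle (size s1)) rot_size_cat /=.
  by rewrite -catA.
move: hc'; rewrite /= rcons_cat rcons_cons cat_path /= => /and3P [p1 el p2].
have c1 : cycle e (z :: s2) by rewrite /= rcons_path p1 el.
have c2 : cycle e (z :: (s3 ++ s1)) by [].
have hsz : n = (size (z :: s2) + size (z :: (s3 ++ s1)))%N.
  by rewrite -hn hs /= !size_cat /= size_cat /=; lia.
move: hodd; rewrite hsz oddD; case ho: (odd (size (z :: s2))) => /= ho2.
  apply: (IH (size (z :: s2))) c1 ho => //; rewrite hsz /=; lia.
apply: (IH (size (z :: (s3 ++ s1)))) c2 _ => //; first by rewrite hsz /=; lia.
Qed.

Definition e2 : rel (T * bool) := fun p q => e p.1 q.1 && (q.2 == ~~ p.2).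

Lemma e2_path a b p : path e2 (a, b) p ->
  path e a (map fst p) /\ (last (a, b) p).2 = odd (size p) (+) b.
Proof.
elim: p a b => [|[c d] p IH] a b /=; first by [].
move=> /andP [/andP [eac /eqP /= hd] pp]; have [h1 h2] := IH c d pp.
by split; [rewrite eac h1 | rewrite h2 /= hd addbN addNb].
Qed.

Lemma e2_sym : symmetric e2.
Proof.
by move=> [a b] [c d]; rewrite /e2 /= sym; case: b; case: d.
Qed.

Lemma bip (F : fieldType) (x0 : T) : gconnected e ->
  ~ (exists c, is_cycle e c /\ odd (size c)) ->
  exists chi : T -> F, chi x0 = 1 /\ forall a b, e a b -> chi a + chi b = 0.
Proof.
move=> hcon hno.
pose A z := connect e2 (x0, false) (z, false).
pose B z := connect e2 (x0, false) (z, true).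
have step : forall a b bb, e a b -> connect e2 (x0, false) (a, bb) ->
    connect e2 (x0, false) (b, ~~ bb).
  move=> a b bb eab h; apply: connect_trans h (connect1 _).
  by rewrite /e2 /= eab eqxx.
have hAB : forall z, A z || B z.
  move=> z; apply: (conn_closed (e := e) (P := fun z => A z || B z)) (hcon x0 z).
    move=> a b eab /orP [ha|hb]; apply/orP; [right|left].
      exact: (step a b false eab ha).
    exact: (step a b true eab hb).
  by rewrite /A connect0.
have hnAB : forall z, ~~ (A z && B z).
  move=> z; apply/negP => /andP [ha hb].
  have hzz : connect e2 (z, false) (z, true).
    by apply: connect_trans hb; rewrite (sym_connect_sym e2_sym).
  case/connectP: hzz => p pp hl.
  have [h1 h2] := e2_path pp.
  rewrite -hl /= addbF in h2.
  apply: hno; apply: (odd_walk_cycle (s := map fst p)); last by rewrite size_map -h2.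
  rewrite (cycle_path z).
  have -> : last z (map fst p) = z by rewrite -[z in last z _]/(fst (z, false)) last_map -hl.
  exact: h1.
exists (fun z => if A z then 1 else -1); split; first by rewrite /A connect0.
move=> a b eab.
case ha: (A a).
  have hb : B b by exact: (step a b false eab ha).
  have := hnAB b; rewrite hb andbT => /negbTE ->; by rewrite subrr.
have hb : B a by have := hAB a; rewrite ha.
have hab : A b by exact: (step a b true eab hb).
by rewrite hab addNr.
Qed.
End Cyc.


Section Main.
Variables (F : fieldType) (T : finType) (e : rel T).
Hypotheses (irr : irreflexive e) (sym : symmetric e) (hes : edge_square F e)
  (h2 : (2%:R : F) != 0) (hcon : gconnected e).

Lemma cycle_odd c : is_cycle e c -> odd (size c).
Proof.
move=> hc; case: c hc => [[]//|x s] hc.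
have xc : x \in x :: s by rewrite mem_head.
have enx : e x (next (x :: s) x) by apply: next_cycle xc; case: hc.
have [w hw] := esq_w irr sym hes (edgesI enx).
by case: (cycle_key irr hc xc hw).
Qed.

Lemma ker_cycle (v : 'rV[F]_#|T|) c : v *m Mg F e = 0 -> is_cycle e c -> v = 0.
Proof.
move=> hv hc; have hker := (kerP irr v).1 hv.
case: c hc => [[]//|z s] hc.
have hz : Uf v z = 0.
  apply: (cycle_zero h2 hc (cycle_odd hc)) => a ha.
  by apply: hker; apply: next_cycle ha; case: hc.
apply: Uf0 => y; apply: (conn_closed (e := e) (P := fun y => Uf v y = 0)) (hcon z y) => //.
by move=> a b eab ha; have := hker a b eab; rewrite ha add0r.
Qed.

Lemma cycles_sub c c' : is_cycle e c -> is_cycle e c' ->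
  cycle_edges c \subset cycle_edges c'.
Proof.
move=> hc hc'; apply/subsetP => eps /imsetP [x xc ->].
apply/negPn/negP => hn.
have enx : e x (next c x) by apply: next_cycle xc; case: hc.
have [w hw] := esq_w irr sym hes (edgesI enx).
have [_ hxy] := cycle_key irr hc xc hw.
have hsum := hw x (next c x) enx; rewrite eqxx -hxy in hsum.
have hx0 : w x != 0.
  by apply/eqP => h0; move: hsum; rewrite h0 addr0 => /eqP; rewrite eq_sym oner_eq0.
have hsq : forall z, w z ^+ 2 = w x ^+ 2.
  move=> z; apply: (conn_closed (e := e) (P := fun z => w z ^+ 2 = w x ^+ 2)) (hcon x z) => //.
  move=> a b eab ha; have := hw a b eab.
  have [hab|hab] := eqVneq [set a; b] [set x; next c x].
    move=> _; have : b \in [set x; next c x] by rewrite -hab set22.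
    by case/set2P => ->; rewrite // -hxy.
  by move=> /addr0_eq <-; rewrite sqrrN.
case: c' hc' hn => [[]//|z s] hc' hn.
have hz : w z = 0.
  apply: (cycle_zero h2 hc' (cycle_odd hc')) => a ha.
  rewrite hw; last by apply: next_cycle ha; case: hc'.
  case: eqP => // heq; case/negP: hn; rewrite -heq.
  by apply/imsetP; exists a.
have := hsq z; rewrite hz expr0n /= => /eqP; rewrite eq_sym expf_eq0 (negbTE hx0) andbF.
by [].
Qed.

End Main.

Unset Implicit Arguments.

Theorem theorem6p3 (F : fieldType) (T : finType) (e : rel T) :
  (2%N \notin [pchar F]) ->
  simple_graph e -> (0 < #|T|)%N -> gconnected e -> edge_square F e ->
  (#|edges e| = #|T|.-1 \/ #|edges e| = #|T|) /\
  (#|edges e| = #|T|.-1 ->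
     [/\ nalg_iso (NG F e) (dsum (F0 F) (Oalg F #|T|.-1)),
         has_dim (ann F e) 1 & is_tree e]) /\
  (#|edges e| = #|T| ->
     [/\ nalg_iso (NG F e) (Oalg F #|T|),
         has_dim (ann F e) 0,
         unicyclic e &
         exists c, is_cycle e c /\ odd (size c)]).
Proof.
move=> hchar [irr sym] hp hcon hes.
have h2 : (2%:R : F) != 0.
  by apply: contra hchar => h; rewrite inE /=.
have hfull := Mg_full irr sym hes.
have hrk : \rank (Mg F e) = #|edges e| := eqP hfull.
have hker : \rank (kermx (Mg F e)) = (#|T| - #|edges e|)%N by rewrite mxrank_ker hrk.
case/card_gt0P: (hp) => x0 _.
have hle1 := ker_rank F irr x0 hcon.
have hqp : (#|edges e| <= #|T|)%N by rewrite -hrk rank_leq_row.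
have hannP : forall u, ann F e u <-> u *m Mg F e = 0 := fun u => annP irr sym u hfull.
have hmul : forall u v, gmul F e u v = pmul (Mg F e) u v := gmulE irr sym.
split; first by rewrite hker in hle1; rewrite -subn1; lia.
split.
  move=> hq.
  have hk1 : \rank (kermx (Mg F e)) = 1%N by rewrite hker hq -subn1; lia.
  split.
  - by apply: iso_F0O hmul hfull _; rewrite hq -subn1; lia.
  - exact: has_dim_ker hannP hk1.
  - split => // c hc.
    have : kermx (Mg F e) != 0 by rewrite -mxrank_eq0 hk1.
    case/rowV0Pn => v hv hv0.
    have hv1 : v *m Mg F e = 0 by apply/eqP; rewrite -sub_kermx.
    by move: hv0; rewrite (ker_cycle irr sym hes h2 hcon hv1 hc) eqxx.
move=> hq.
have hk0 : \rank (kermx (Mg F e)) = 0%N by rewrite hker hq subnn.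
have hodd : exists c, is_cycle e c /\ odd (size c).
  apply: NNPP => hno.
  have [chi [hchi0 hchi]] := bip irr sym F x0 hcon hno.
  have hv : vecf chi *m Mg F e = 0.
    by apply/(kerP irr) => a b eab; rewrite !UfK; exact: hchi.
  have : (vecf chi <= kermx (Mg F e))%MS by rewrite sub_kermx hv.
  move: hk0 => /eqP; rewrite mxrank_eq0 => /eqP ->; rewrite submx0 => /eqP h0.
  by move: hchi0; rewrite -(UfK chi x0) h0 /Uf mxE => /eqP; rewrite eq_sym oner_eq0.
split.
- by apply: iso_O hmul hfull _.
- exact: has_dim_ker hannP hk0.
- split => //; case: hodd => c [hc _]; exists c; split => // c' hc'.
  by apply/eqP; rewrite eqEsubset !(cycles_sub irr sym hes h2 hcon).
- exact: hodd.
Qed.
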